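(* Let $\mathcal{A}_1,\dots,\mathcal{A}_N$ be finite nonempty strategy sets, $\mathcal{A}=\prod_q\mathcal{A}_q$, fix a player $p$ and $\mathcal{A}_{-p}=\prod_{q\ne p}\mathcal{A}_q$. Consider the linear maps on payoffs $G\in\mathbb{R}^{\mathcal{A}}$: $T^{\mathrm{WSCE}}_p:\mathbb{R}^{\mathcal{A}}\to\mathbb{R}^{\mathcal{A}_p\times\mathcal{A}_p\times\mathcal{A}_{-p}}$, $(T^{\mathrm{WSCE}}_pG)(a'_p,a''_p,a_{-p})=G(a'_p,a_{-p})-G(a''_p,a_{-p})$; $T^{\mathrm{CE}}_p:\mathbb{R}^{\mathcal{A}}\to\mathbb{R}^{\mathcal{A}_p\times\mathcal{A}_p\times\mathcal{A}}$, $(T^{\mathrm{CE}}_pG)(a'_p,a''_p,a)=G(a'_p,a_{-p})-G(a''_p,a_{-p})$ if $a_p=a''_p$ and $0$ otherwise; $T^{\mathrm{CCE}}_p:\mathbb{R}^{\mathcal{A}}\to\mathbb{R}^{\mathcal{A}_p\times\mathcal{A}}$, $(T^{\mathrm{CCE}}_pG)(a'_p,a)=G(a'_p,a_{-p})-G(a)$. Then each of $T^{\mathrm{WSCE}}_p$, $T^{\mathrm{CE}}_p$ and $T^{\mathrm{CCE}}_p$ has rank $|\mathcal{A}|-|\mathcal{A}_{-p}|$.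
   Context: Joint strategies are written $a=(a_p,a_{-p})$ with $a_p\in\mathcal{A}_p$ and $a_{-p}\in\mathcal{A}_{-p}$. *)

(* Defs.v *)
From HB Require Import structures.
From mathcomp Require Import all_boot all_order all_algebra.
From mathcomp Require Import reals.
Set Implicit Arguments. Unset Strict Implicit. Unset Printing Implicit Defensive.
Import Order.TTheory GRing.Theory Num.Theory.
Local Open Scope ring_scope.

Section Game.
Variables (N : nat) (A : 'I_N -> finType).

Definition Joint := {dffun forall q : 'I_N, A q}.

Definition Others (p : 'I_N) := {dffun forall q : {q : 'I_N | q != p}, A (sval q)}.

Definition rest (p : 'I_N) (a : Joint) : Others p := [ffun q => a (sval q)].

Definition join (p : 'I_N) (x : A p) (y : Others p) : Joint :=
  [ffun q : 'I_N => match q =P p return A q with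
                    | ReflectT e => eq_rect_r A x e
                    | ReflectF ne => y (exist _ q (introN eqP ne))
                    end].

Variables (R : realType) (p : 'I_N).

Definition T_WSCE (G : {ffun Joint -> R}) : {ffun A p * A p * Others p -> R} :=
  [ffun t => G (join t.1.1 t.2) - G (join t.1.2 t.2)].

Definition T_CE (G : {ffun Joint -> R}) : {ffun A p * A p * Joint -> R} :=
  [ffun t : A p * A p * Joint => if t.2 p == t.1.2
             then G (join t.1.1 (rest p t.2)) - G (join t.1.2 (rest p t.2))
             else 0].

Definition T_CCE (G : {ffun Joint -> R}) : {ffun A p * Joint -> R} :=
  [ffun t : A p * Joint => G (join t.1 (rest p t.2)) - G t.2].
End Game.

Definition lin_rank (R : fieldType) (I J : finType)
  (f : {ffun I -> R} -> {ffun J -> R}) : nat :=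
  \rank (\matrix_(i < #|{:I}|, j < #|{:J}|)
           f [ffun x => ((x == enum_val i)%:R : R)] (enum_val j)).

(* Main.v *)
Require Import Defs.
From HB Require Import structures.
From mathcomp Require Import all_boot all_order all_algebra.
From mathcomp Require Import reals.
Set Implicit Arguments. Unset Strict Implicit. Unset Printing Implicit Defensive.
Import Order.TTheory GRing.Theory Num.Theory.
Local Open Scope ring_scope.

Ltac gen_r := match goal with |- context[match ?r with ReflectT _ => _ | ReflectF _ => _ end] => generalize r at 1; let rr := fresh "r" in intro rr end.

Section Aux.
Variables (N : nat) (A : 'I_N -> finType) (p : 'I_N).

Lemma join_p (x : A p) (y : Others A p) : join x y p = x.
Proof. rewrite ffunE; gen_r.
refine (match r with ReflectT e => _ | ReflectF ne => _ end).
 by rewrite (eq_axiomK e). by case: ne. Qed.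

Lemma rest_join (x : A p) (y : Others A p) : rest p (join x y) = y.
Proof.
apply/ffunP => q; rewrite !ffunE; gen_r.
refine (match r with ReflectT e => _ | ReflectF ne => _ end).
  by exfalso; move: (valP q); rewrite /= e eqxx.
match goal with |- context[@exist _ _ _ ?h] => generalize h end.
case: q r ne => q0 qn /= _ _ h; by rewrite (bool_irrelevance h qn).
Qed.

Lemma join_rest (a : Joint A) : join (a p) (rest p a) = a.
Proof.
apply/ffunP => q; rewrite !ffunE; gen_r.
refine (match r with ReflectT e => _ | ReflectF ne => _ end).
  by clear r; subst q.
by rewrite ffunE.
Qed.

Lemma sum_ind (F : finType) (R : nzRingType) (c : 'I_#|F| -> R) (z : F) :
  \sum_(y < #|F|) c y * ((z == enum_val y)%:R) = c (enum_rank z).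
Proof.
rewrite (bigD1 (enum_rank z)) //= enum_rankK eqxx mulr1 big1 ?addr0 //.
move=> y ne; case: eqP => [e|]; last by rewrite mulr0.
by move: ne; rewrite e enum_valK eqxx.
Qed.
End Aux.

Section Main.
Variables (N : nat) (A : 'I_N -> finType) (p : 'I_N) (R : realType) (a0 : A p).

Definition PP (G : {ffun Joint A -> R}) :=
  forall (x x' : A p) y, G (join x y) = G (join x' y).

Lemma rank_gen (J : finType) (f : {ffun Joint A -> R} -> {ffun J -> R}) :
  (forall G H, f (G + H) = f G + f H) -> (forall (c : R) (G : {ffun Joint A -> R}),
     f [ffun x => c * G x] = [ffun t => c * f G t]) ->
  (forall G, f G = 0 <-> PP G) ->
  lin_rank f = (#|{:Joint A}| - #|{:Others A p}|)%N.
Proof.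
move=> fD fZ fK.
rewrite /lin_rank; set M := \matrix_(_, _) _.
have f0 : f 0 = 0.
  have -> : (0 : {ffun Joint A -> R}) = [ffun x => 0 * (0 : {ffun Joint A -> R}) x].
    by apply/ffunP => x; rewrite !ffunE mul0r.
  by rewrite fZ; apply/ffunP => t; rewrite !ffunE mul0r.
have fsum : forall (I' : Type) (s : seq I') (c : I' -> R) (g : I' -> {ffun Joint A -> R}),
    f (\sum_(i <- s) [ffun x => c i * g i x]) =
    \sum_(i <- s) [ffun t => c i * f (g i) t].
  move=> I' s c g; elim: s => [|i s IH]; first by rewrite !big_nil.
  by rewrite !big_cons fD fZ IH.
pose uf (u : 'rV[R]_#|{:Joint A}|) : {ffun Joint A -> R} :=
  [ffun x => u 0 (enum_rank x)].
have key : forall u, u *m M = \row_j f (uf u) (enum_val j).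
  move=> u; apply/rowP => j; rewrite !mxE.
  have -> : uf u = \sum_i [ffun x => u 0 i * ([ffun x => ((x == enum_val i)%:R : R)] x)].
    apply/ffunP => x; rewrite sum_ffunE ffunE -sum_ind.
    by apply: eq_bigr => i _; rewrite !ffunE.
  rewrite fsum sum_ffunE; apply: eq_bigr => i _.
  by rewrite !ffunE mxE.
have kerP : forall u, u *m M = 0 -> PP (uf u).
  move=> u H; apply/fK; apply/ffunP => t.
  move/rowP: H => /(_ (enum_rank t)).
  by rewrite key !mxE enum_rankK ffunE.
have kerP' : forall u, PP (uf u) -> u *m M = 0.
  move=> u H; apply/rowP => j; rewrite key !mxE.
  by move/fK: H => ->; rewrite ffunE.
pose K : 'M[R]_(#|{:Others A p}|, #|{:Joint A}|) :=
  \matrix_(y, i) ((rest p (enum_val i) == enum_val y)%:R).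
have rK : \rank K = #|{:Others A p}|.
  apply/eqP; apply: inj_row_free => v Hv; apply/rowP => y.
  move/rowP: Hv => /(_ (enum_rank (join a0 (enum_val y)))).
  rewrite !mxE.
  under eq_bigr do rewrite mxE enum_rankK rest_join.
  by rewrite sum_ind enum_valK.
have s1 : (K <= kermx M)%MS.
  rewrite sub_kermx; apply/eqP/row_matrixP => y; rewrite row_mul row0.
  apply: kerP' => x x' y'; rewrite !ffunE !mxE !enum_rankK.
  by rewrite !rest_join.
have s2 : (kermx M <= K)%MS.
  apply/row_subP => i; set u := row i (kermx M).
  have Hu : u *m M = 0 by apply/eqP; rewrite -sub_kermx row_sub.
  have PU := kerP u Hu; clearbody u.
  apply/submxP; exists (\row_y u 0 (enum_rank (join a0 (enum_val y)))).
  apply/rowP => j; rewrite !mxE.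
  under eq_bigr do rewrite !mxE.
  rewrite (@sum_ind _ _ (fun y => u 0 (enum_rank (join a0 (enum_val y))))).
  rewrite enum_rankK.
  have := PU a0 (enum_val j p) (rest p (enum_val j)).
  by rewrite !ffunE join_rest enum_valK.
have rk : \rank (kermx M) = #|{:Others A p}|.
  by apply/eqP; rewrite eqn_leq -{1}rK mxrankS //= -rK mxrankS.
by rewrite -{1}(subKn (rank_leq_row M)) -mxrank_ker rk.
Qed.
End Main.

Theorem mainTheorem7 (N : nat) (A : 'I_N -> finType)
  (hA : forall q : 'I_N, (0 < #|{: A q}|)%N) (R : realType) (p : 'I_N) :
  [/\ lin_rank (@T_WSCE N A R p) = (#|{: Joint A}| - #|{: Others A p}|)%N,
      lin_rank (@T_CE N A R p) = (#|{: Joint A}| - #|{: Others A p}|)%N &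
      lin_rank (@T_CCE N A R p) = (#|{: Joint A}| - #|{: Others A p}|)%N].
Proof.
have [a0 _] := card_gt0P (hA p).
split; apply: (rank_gen a0).
- by move=> G H; apply/ffunP => t; rewrite !ffunE opprD addrACA.
- by move=> c G; apply/ffunP => t; rewrite !ffunE mulrBr.
- move=> G; split.
    move=> H x x' y; move/ffunP: H => /(_ (x, x', y)).
    by rewrite !ffunE => /eqP; rewrite subr_eq0 => /eqP.
  by move=> H; apply/ffunP => [[[x x'] y]]; rewrite !ffunE /= (H x x' y) subrr.
- move=> G H; apply/ffunP => t; rewrite !ffunE.
  by case: ifP => _; rewrite ?addr0 // opprD addrACA.
- move=> c G; apply/ffunP => t; rewrite !ffunE.
  by case: ifP => _; rewrite ?mulr0 // mulrBr.
- move=> G; split.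
    move=> H x x' y; move/ffunP: H => /(_ (x, x', join x' y)).
    rewrite [LHS]ffunE [RHS]ffunE /= join_p eqxx rest_join => /eqP.
    by rewrite subr_eq0 => /eqP.
  move=> H; apply/ffunP => [[[x x'] a]]; rewrite !ffunE /=.
  by case: ifP => _ //; rewrite (H x x' (rest p a)) subrr.
- by move=> G H; apply/ffunP => t; rewrite !ffunE opprD addrACA.
- by move=> c G; apply/ffunP => t; rewrite !ffunE mulrBr.
- move=> G; split.
    move=> H x x' y; move/ffunP: H => /(_ (x, join x' y)).
    rewrite !ffunE /= rest_join => /eqP.
    by rewrite subr_eq0 => /eqP.
  move=> H; apply/ffunP => [[x a]]; rewrite !ffunE /=.
  by rewrite (H x (a p) (rest p a)) join_rest subrr.
Qed.
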